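(* Let $\mathcal{S}_n(2413,3142)$ denote the set of permutations of $\{1,\dots,n\}$ (in one-line notation) avoiding both patterns $2413$ and $3142$, and let $S(x)=\sum_{n\ge 0}\lvert\mathcal{S}_n(2413,3142)\rvert x^n$, with the convention that the $n=0$ coefficient is $1$. For $1\le \ell\le n$ let $\mathcal{S}_n^{\ell\mapsto 1}(2413,3142)=\{\sigma\in \mathcal{S}_n(2413,3142):\sigma(\ell)=1\}$. Then the generating function \[ g(x,u)=\sum_{n=1}^\infty\sum_{\ell=1}^n \lvert\mathcal{S}_n^{\ell\mapsto 1}(2413,3142)\rvert\, u^{\ell}x^n \] satisfies \[ g(x,u)=\frac{xu\,S(x)S(xu)}{S(x)+S(xu)-S(x)S(xu)}. \]
   Context: A permutation $\sigma$ avoids a pattern $p$ if no subsequence of its one-line notation is order-isomorphic to $p$. Permutations avoiding $2413$ and $3142$ are called separable permutations. *)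

(* Defs.v *)
From mathcomp Require Import all_boot all_order all_fingroup all_algebra.
Set Implicit Arguments. Unset Strict Implicit. Unset Printing Implicit Defensive.
Import GRing.Theory Num.Theory.

(* Permutations of {1..n} are modelled by 'S_n = {perm 'I_n} (0-indexed:
   position i : 'I_n stands for i+1, value v stands for v+1). *)

Definition contains_pattern (p : seq nat) (n : nat) (s : 'S_n) : bool :=
  [exists f : {ffun 'I_(size p) -> 'I_n},
     [forall a : 'I_(size p), forall b : 'I_(size p),
        ((a < b)%N ==> (f a < f b)%N) &&
        ((s (f a) < s (f b))%N == (nth 0%N p a < nth 0%N p b)%N)]].

Definition avoids (p : seq nat) (n : nat) (s : 'S_n) : bool :=
  ~~ contains_pattern p s.

Definition separable (n : nat) (s : 'S_n) : bool :=
  avoids [:: 2; 4; 1; 3]%N s && avoids [:: 3; 1; 4; 2]%N s.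

(* |S_n(2413,3142)|; for n = 0 this is 1 (the empty permutation). *)
Definition sep_count (n : nat) : nat := #|[set s : 'S_n | separable s]|.

Definition sep_count_at (n l : nat) : nat :=
  #|[set s : 'S_n | separable s &&
       [exists i : 'I_n, (i.+1 == l) && (val (s i) == 0%N)]]|.

(* Formal power series in two variables x, u with integer coefficients:
   F n l is the coefficient of x^n u^l. *)
Definition bser := nat -> nat -> int.

Definition bser_add (F G : bser) : bser := fun n l => (F n l + G n l)%R.
Definition bser_sub (F G : bser) : bser := fun n l => (F n l - G n l)%R.
Definition bser_mul (F G : bser) : bser := fun n l =>
  (\sum_(i < n.+1) \sum_(j < l.+1) F i j * G (n - i)%N (l - j)%N)%R.
Definition bser_mul_xu (F : bser) : bser := fun n l =>
  match n, l with
  | n'.+1, l'.+1 => F n' l'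
  | _, _ => 0%R
  end.

Definition Sx : bser := fun n l => if l == 0%N then Posz (sep_count n) else 0%R.
Definition Sxu : bser := fun n l => if l == n then Posz (sep_count n) else 0%R.
Definition gxu : bser := fun n l =>
  if (1 <= l <= n)%N then Posz (sep_count_at n l) else 0%R.

(* Main.v *)
Require Import Defs.
From mathcomp Require Import all_boot all_order all_fingroup all_algebra.
From mathcomp Require Import zify ring.
From Stdlib Require Import FunctionalExtensionality.
Set Implicit Arguments. Unset Strict Implicit. Unset Printing Implicit Defensive.

Ltac nlia := try (change (Equality.sort Datatypes_nat__canonical__eqtype_Equality) with nat in * );
  try (change (@size (Equality.sort _)) with (@size nat) in * );
  try (change (@nth (Equality.sort _)) with (@nth nat) in * ); lia.

Definition isperm (s : seq nat) := perm_eq s (iota 0 (size s)).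

Lemma ispermE s : isperm s = uniq s && all (fun x => x < size s) s.
Proof.
apply/idP/andP.
- move=> H; split; first by rewrite (perm_uniq H) iota_uniq.
  apply/allP=> x; rewrite (perm_mem H) mem_iota; lia.
- move=> [U /allP A]; apply: uniq_perm => //; first exact: iota_uniq.
  have sub : {subset s <= iota 0 (size s)} by move=> x /A; rewrite mem_iota; lia.
  by have [_ ] := uniq_min_size U sub (eq_leq (size_iota _ _)).
Qed.

Lemma isperm_lt s x : isperm s -> x \in s -> x < size s.
Proof. by rewrite ispermE => /andP [_ /allP]; apply. Qed.

Lemma isperm_mem s x : isperm s -> x < size s -> x \in s.
Proof. by move=> H hx; rewrite (perm_mem H) mem_iota; lia. Qed.

Lemma isperm_uniq s : isperm s -> uniq s.
Proof. by rewrite ispermE => /andP []. Qed.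

Definition occ (R : nat -> nat -> nat -> nat -> bool) (s : seq nat) i j k l :=
  [&& i < j, j < k, k < l, l < size s &
      R (nth 0 s i) (nth 0 s j) (nth 0 s k) (nth 0 s l)].

Definition pat R s := let I := iota 0 (size s) in
  has (fun i => has (fun j => has (fun k => has (fun l => occ R s i j k l) I) I) I) I.

Lemma patP R s : reflect (exists i j k l, occ R s i j k l) (pat R s).
Proof.
apply: (iffP idP).
- by case/hasP=> i _ /hasP [j _ /hasP [k _ /hasP [l _ H]]]; exists i, j, k, l.
- move=> [i [j [k [l H]]]]; have /and5P [h1 h2 h3 h4 _] := H.
  apply/hasP; exists i; first by rewrite mem_iota; lia.
  apply/hasP; exists j; first by rewrite mem_iota; lia.
  apply/hasP; exists k; first by rewrite mem_iota; lia.
  apply/hasP; exists l; first by rewrite mem_iota; lia.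
  done.
Qed.

Definition R2413 (a b c d : nat) := [&& c < a, a < d & d < b].
Definition R3142 (a b c d : nat) := [&& b < d, d < a & a < c].

Definition sepl s := ~~ pat R2413 s && ~~ pat R3142 s.

Lemma pat_take R s k : pat R (take k s) -> pat R s.
Proof.
move=> /patP [i [j [k' [l /and5P [h1 h2 h3 h4 h5]]]]].
rewrite size_take_min in h4.
apply/patP; exists i, j, k', l; rewrite !nth_take in h5; try lia.
apply/and5P; split => //; lia.
Qed.

Lemma pat_drop R s k : pat R (drop k s) -> pat R s.
Proof.
move=> /patP [i [j [k' [l /and5P [h1 h2 h3 h4 h5]]]]].
rewrite size_drop in h4.
apply/patP; exists (k + i), (k + j), (k + k'), (k + l); rewrite !nth_drop in h5.
apply/and5P; split => //; lia.
Qed.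

Definition Rinv (R : nat -> nat -> nat -> nat -> bool) :=
  forall (f : nat -> nat) a b c d,
  (forall x y, x \in [:: a; b; c; d] -> y \in [:: a; b; c; d] -> x < y -> f x < f y) ->
  R (f a) (f b) (f c) (f d) = R a b c d.

Lemma mono_ltE (L : seq nat) f (x y : nat) :
  (forall x y, x \in L -> y \in L -> x < y -> f x < f y) ->
  x \in L -> y \in L -> (f x < f y) = (x < y).
Proof.
move=> H hx hy; case: (ltngtP x y) => h.
- by rewrite H.
- by apply/negbTE; rewrite -leqNgt ltnW // H.
- by subst; rewrite ltnn.
Qed.

Lemma Rinv2413 : Rinv R2413.
Proof.
move=> f a b c d H; rewrite /R2413.
by rewrite !(mono_ltE H) ?inE ?eqxx ?orbT.
Qed.

Lemma Rinv3142 : Rinv R3142.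
Proof.
move=> f a b c d H; rewrite /R3142.
by rewrite !(mono_ltE H) ?inE ?eqxx ?orbT.
Qed.

Lemma occ_map R f (s : seq nat) i j k l : Rinv R ->
  (forall x y, x \in s -> y \in s -> x < y -> f x < f y) ->
  occ R (map f s) i j k l = occ R s i j k l.
Proof.
move=> HR Hf; rewrite /occ size_map.
case: (boolP [&& i < j, j < k, k < l & l < size s]) => [/and4P [h1 h2 h3 h4]|h].
- have Hm : forall x, x \in [:: nth 0 s i; nth 0 s j; nth 0 s k; nth 0 s l] -> x \in s.
    by move=> x; rewrite !inE => /or4P [] /eqP ->; apply: mem_nth; nlia.
  rewrite h1 h2 h3 h4 /= !(nth_map 0); try nlia.
  rewrite HR // => x y hx hy; apply: Hf; [exact: Hm hx| exact: Hm hy].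
- by apply/idP/idP => /and5P [h1 h2 h3 h4 _]; case/negP: h; rewrite h1 h2 h3 h4.
Qed.

Lemma pat_map R f (s : seq nat) : Rinv R ->
  (forall x y, x \in s -> y \in s -> x < y -> f x < f y) ->
  pat R (map f s) = pat R s.
Proof.
move=> HR Hf; apply/patP/patP => -[i [j [k [l H]]]]; exists i, j, k, l.
- by rewrite -(occ_map i j k l HR Hf).
- by rewrite (occ_map i j k l HR Hf).
Qed.

Definition HRsum (R : nat -> nat -> nat -> nat -> bool) := forall a b c d, R a b c d ->
  [&& ~~ [&& a < b, a < c & a < d], ~~ [&& a < c, a < d, b < c & b < d]
    & ~~ [&& a < d, b < d & c < d]].
Definition HRskew (R : nat -> nat -> nat -> nat -> bool) := forall a b c d, R a b c d ->
  [&& ~~ [&& b < a, c < a & d < a], ~~ [&& c < a, d < a, c < b & d < b]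
    & ~~ [&& d < a, d < b & d < c]].

Lemma HRsum2413 : HRsum R2413. Proof. move=> a b c d; rewrite /R2413; lia. Qed.
Lemma HRsum3142 : HRsum R3142. Proof. move=> a b c d; rewrite /R3142; lia. Qed.
Lemma HRskew2413 : HRskew R2413. Proof. move=> a b c d; rewrite /R2413; lia. Qed.
Lemma HRskew3142 : HRskew R3142. Proof. move=> a b c d; rewrite /R3142; lia. Qed.

Lemma occ_take R (s : seq nat) k i j k' l : l < k -> occ R s i j k' l -> occ R (take k s) i j k' l.
Proof.
move=> hl /and5P [h1 h2 h3 h4 h5]; apply/and5P; split => //.
- rewrite size_take_min; nlia.
- by rewrite !nth_take //; nlia.
Qed.

Lemma occ_drop R (s : seq nat) k i j k' l : k <= i -> occ R s i j k' l ->
  occ R (drop k s) (i - k) (j - k) (k' - k) (l - k).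
Proof.
move=> hi /and5P [h1 h2 h3 h4 h5]; apply/and5P; split; try nlia.
- rewrite size_drop; nlia.
- rewrite !nth_drop !subnKC //; nlia.
Qed.

Lemma pat_split_lt R (s : seq nat) k : HRsum R ->
  (forall i j, i < k -> k <= j -> j < size s -> nth 0 s i < nth 0 s j) ->
  pat R s -> pat R (take k s) || pat R (drop k s).
Proof.
move=> HR Hs /patP [i [j [k' [l H]]]].
case: (ltnP l k) => hl.
  by apply/orP; left; apply/patP; exists i, j, k', l; apply: occ_take.
case: (leqP k i) => hi.
  by apply/orP; right; apply/patP; exists (i - k), (j - k), (k' - k), (l - k); apply: occ_drop.
move: (H) => /and5P [h1 h2 h3 h4 /HR /and3P [n1 n2 n3]].
have hjs : j < size s by nlia.
have hks : k' < size s by nlia.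
case: (leqP k j) => hj.
  have := Hs i j hi hj hjs; have := Hs i k' hi (leq_trans hj (ltnW h2)) hks;
  have := Hs i l hi hl h4; nlia.
case: (leqP k k') => hk.
  have := Hs i k' hi hk hks; have := Hs i l hi hl h4;
  have := Hs j k' hj hk hks; have := Hs j l hj hl h4; nlia.
have := Hs i l hi hl h4; have := Hs j l hj hl h4;
have := Hs k' l hk hl h4; nlia.
Qed.

Lemma pat_split_gt R (s : seq nat) k : HRskew R ->
  (forall i j, i < k -> k <= j -> j < size s -> nth 0 s j < nth 0 s i) ->
  pat R s -> pat R (take k s) || pat R (drop k s).
Proof.
move=> HR Hs /patP [i [j [k' [l H]]]].
case: (ltnP l k) => hl.
  by apply/orP; left; apply/patP; exists i, j, k', l; apply: occ_take.
case: (leqP k i) => hi.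
  by apply/orP; right; apply/patP; exists (i - k), (j - k), (k' - k), (l - k); apply: occ_drop.
move: (H) => /and5P [h1 h2 h3 h4 /HR /and3P [n1 n2 n3]].
have hjs : j < size s by nlia.
have hks : k' < size s by nlia.
case: (leqP k j) => hj.
  have := Hs i j hi hj hjs; have := Hs i k' hi (leq_trans hj (ltnW h2)) hks;
  have := Hs i l hi hl h4; nlia.
case: (leqP k k') => hk.
  have := Hs i k' hi hk hks; have := Hs i l hi hl h4;
  have := Hs j k' hj hk hks; have := Hs j l hj hl h4; nlia.
have := Hs i l hi hl h4; have := Hs j l hj hl h4;
have := Hs k' l hk hl h4; nlia.
Qed.

Definition dsum (A B : seq nat) := A ++ map (addn (size A)) B.
Definition ssum (A B : seq nat) := map (addn (size B)) A ++ B.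

Lemma size_dsum A B : size (dsum A B) = size A + size B.
Proof. by rewrite /dsum size_cat size_map. Qed.
Lemma size_ssum A B : size (ssum A B) = size A + size B.
Proof. by rewrite /ssum size_cat size_map. Qed.

Lemma addn_mono n (s : seq nat) : forall x y : nat, x \in s -> y \in s -> x < y -> n + x < n + y.
Proof. by move=> x y _ _; rewrite ltn_add2l. Qed.

Lemma nth_dsumL A B i : i < size A -> nth 0 (dsum A B) i = nth 0 A i.
Proof. by move=> h; rewrite /dsum nth_cat h. Qed.
Lemma nth_dsumR A B i : size A <= i -> i < size A + size B ->
  nth 0 (dsum A B) i = size A + nth 0 B (i - size A).
Proof.
move=> h1 h2; rewrite /dsum nth_cat ltnNge h1 /= (nth_map 0) //; nlia.
Qed.
Lemma nth_ssumL A B i : i < size A -> nth 0 (ssum A B) i = size B + nth 0 A i.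
Proof. by move=> h; rewrite /ssum nth_cat size_map h (nth_map 0). Qed.
Lemma nth_ssumR A B i : size A <= i ->
  nth 0 (ssum A B) i = nth 0 B (i - size A).
Proof. by move=> h1; rewrite /ssum nth_cat size_map ltnNge h1. Qed.

Lemma pat_dsum R A B : HRsum R -> Rinv R -> isperm A ->
  pat R (dsum A B) = pat R A || pat R B.
Proof.
move=> HR HI pA; apply/idP/orP.
- move=> /(@pat_split_lt _ _ (size A) HR).
  rewrite /dsum take_size_cat // drop_size_cat // pat_map //; last exact: addn_mono.
  move=> H; have /orP : pat R A || pat R B; last by [].
  apply: H => i j hi hj; rewrite size_cat size_map => hjs.
  rewrite -/(dsum A B) nth_dsumL // nth_dsumR //.
  have : nth 0 A i < size A by apply: isperm_lt => //; apply: mem_nth.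
  nlia.
- move=> [] H.
  + by apply: (@pat_take _ _ (size A)); rewrite /dsum take_size_cat.
  + apply: (@pat_drop _ _ (size A)); rewrite /dsum drop_size_cat //.
    by rewrite pat_map //; exact: addn_mono.
Qed.

Lemma pat_ssum R A B : HRskew R -> Rinv R -> isperm B ->
  pat R (ssum A B) = pat R A || pat R B.
Proof.
move=> HR HI pB; apply/idP/orP.
- move=> /(@pat_split_gt _ _ (size A) HR).
  rewrite /ssum take_size_cat ?size_map // drop_size_cat ?size_map //.
  rewrite pat_map //; last exact: addn_mono.
  move=> H; have /orP : pat R A || pat R B; last by [].
  apply: H => i j hi hj; rewrite size_cat size_map => hjs.
  rewrite -/(ssum A B) (nth_ssumL B hi) (nth_ssumR B hj).
  have : nth 0 B (j - size A) < size B by apply: isperm_lt => //; apply: mem_nth; nlia.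
  nlia.
- move=> [] H.
  + apply: (@pat_take _ _ (size A)); rewrite /ssum take_size_cat ?size_map //.
    by rewrite pat_map //; exact: addn_mono.
  + by apply: (@pat_drop _ _ (size A)); rewrite /ssum drop_size_cat ?size_map.
Qed.

Lemma sepl_dsum A B : isperm A -> sepl (dsum A B) = sepl A && sepl B.
Proof.
move=> pA; rewrite /sepl !pat_dsum //;
  try exact: HRsum2413; try exact: HRsum3142; try exact: Rinv2413; try exact: Rinv3142.
by case: (pat R2413 A); case: (pat R2413 B); case: (pat R3142 A); case: (pat R3142 B).
Qed.

Lemma sepl_ssum A B : isperm B -> sepl (ssum A B) = sepl A && sepl B.
Proof.
move=> pB; rewrite /sepl !pat_ssum //;
  try exact: HRskew2413; try exact: HRskew3142; try exact: Rinv2413; try exact: Rinv3142.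
by case: (pat R2413 A); case: (pat R2413 B); case: (pat R3142 A); case: (pat R3142 B).
Qed.

Definition sumsplit (s : seq nat) k := all (fun x => x < k) (take k s).
Definition skewsplit (s : seq nat) k := all (fun x => size s - k <= x) (take k s).

Lemma count_iota_lt k n : count (fun x => x < k) (iota 0 n) = minn k n.
Proof.
elim: n => [|n IH]; first by rewrite minn0.
by rewrite -addn1 iotaD count_cat IH /= add0n; nlia.
Qed.

Lemma count_iota_ge k n : count (fun x => k <= x) (iota 0 n) = n - k.
Proof.
elim: n => [|n IH] //.
by rewrite -addn1 iotaD count_cat IH /= add0n; nlia.
Qed.

Lemma isperm_count (s : seq nat) a : isperm s -> count a s = count a (iota 0 (size s)).
Proof. by move=> /seq.permP H; apply: H. Qed.

Lemma sumsplit_drop s k : isperm s -> k <= size s -> sumsplit s k ->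
  all (fun x => k <= x) (drop k s).
Proof.
move=> H hk Hs.
have c := isperm_count (fun x => x < k) H.
rewrite count_iota_lt -(cat_take_drop k s) count_cat size_cat size_takel // size_drop in c.
move: Hs; rewrite /sumsplit all_count size_takel // => /eqP c1.
apply/allP => x hx; rewrite leqNgt; apply/negP => hlt.
have : 0 < count (fun x => x < k) (drop k s) by rewrite -has_count; apply/hasP; exists x.
nlia.
Qed.

Lemma skewsplit_drop s k : isperm s -> k <= size s -> skewsplit s k ->
  all (fun x => x < size s - k) (drop k s).
Proof.
move=> H hk Hs.
have c := isperm_count (fun x => size s - k <= x) H.
rewrite count_iota_ge -{2}(cat_take_drop k s) count_cat in c.
move: Hs; rewrite /skewsplit all_count size_takel // => /eqP c1.
apply/allP => x hx; rewrite ltnNge; apply/negP => hlt.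
have : 0 < count (fun x => size s - k <= x) (drop k s).
  by rewrite -has_count; apply/hasP; exists x.
nlia.
Qed.

Lemma isperm_dsum A B : isperm A -> isperm B -> isperm (dsum A B).
Proof.
rewrite !ispermE size_dsum => /andP [uA aA] /andP [uB aB].
rewrite /dsum cat_uniq uA (map_inj_uniq (@addnI _)) uB all_cat /= andbT.
apply/andP; split.
- apply/hasPn => y /mapP [x _ ->]; apply/negP => /(allP aA); nlia.
- apply/andP; split; first by apply/allP => x /(allP aA); nlia.
  by apply/allP => y /mapP [x /(allP aB) h ->]; nlia.
Qed.

Lemma isperm_ssum A B : isperm A -> isperm B -> isperm (ssum A B).
Proof.
rewrite !ispermE size_ssum => /andP [uA aA] /andP [uB aB].
rewrite /ssum cat_uniq uB (map_inj_uniq (@addnI _)) uA all_cat /= andbT.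
apply/andP; split.
- apply/hasPn => y /(allP aB) hy; apply/negP => /mapP [x _ e]; nlia.
- apply/andP; split; last by apply/allP => x /(allP aB); nlia.
  by apply/allP => y /mapP [x /(allP aA) h ->]; nlia.
Qed.

Lemma isperm_all (s : seq nat) : isperm s -> all (fun x => x < size s) s.
Proof. by rewrite ispermE => /andP []. Qed.

Lemma sumsplit_dsum A B : isperm A -> sumsplit (dsum A B) (size A).
Proof. by move=> pA; rewrite /sumsplit /dsum take_size_cat // isperm_all. Qed.

Lemma skewsplit_ssum A B : isperm B -> skewsplit (ssum A B) (size A).
Proof.
move=> pB; rewrite /skewsplit size_ssum /ssum take_size_cat ?size_map //.
by apply/allP => y /mapP [x _ ->]; nlia.
Qed.

Definition sumR (s : seq nat) k := map (subn^~ k) (drop k s).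
Definition skL (s : seq nat) k := map (subn^~ (size s - k)) (take k s).

Lemma dsumK1 A B : take (size A) (dsum A B) = A.
Proof. by rewrite /dsum take_size_cat. Qed.
Lemma dsumK2 A B : sumR (dsum A B) (size A) = B.
Proof.
rewrite /sumR /dsum drop_size_cat // -map_comp map_id_in // => x _ /=; nlia.
Qed.
Lemma ssumK1 A B : skL (ssum A B) (size A) = A.
Proof.
rewrite /skL size_ssum /ssum take_size_cat ?size_map //.
rewrite -map_comp map_id_in // => x _ /=; nlia.
Qed.
Lemma ssumK2 A B : drop (size A) (ssum A B) = B.
Proof. by rewrite /ssum drop_size_cat // size_map. Qed.

Lemma dsum_split s k : isperm s -> k <= size s -> sumsplit s k ->
  dsum (take k s) (sumR s k) = s.
Proof.
move=> H hk Hs; have /allP hd := sumsplit_drop H hk Hs.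
rewrite /dsum /sumR size_takel // -map_comp map_id_in ?cat_take_drop // => x /hd /=; nlia.
Qed.

Lemma ssum_split s k : isperm s -> k <= size s -> skewsplit s k ->
  ssum (skL s k) (drop k s) = s.
Proof.
move=> H hk /allP Hs.
rewrite /ssum /skL size_drop -map_comp map_id_in ?cat_take_drop // => x /Hs /=; nlia.
Qed.

Lemma isperm_take s k : isperm s -> k <= size s -> sumsplit s k -> isperm (take k s).
Proof.
move=> H hk Hs; rewrite ispermE take_uniq ?isperm_uniq // size_takel //.
Qed.

Lemma isperm_sumR s k : isperm s -> k <= size s -> sumsplit s k -> isperm (sumR s k).
Proof.
move=> H hk Hs; have /allP hd := sumsplit_drop H hk Hs.
rewrite ispermE /sumR size_map size_drop; apply/andP; split.
- rewrite map_inj_in_uniq ?drop_uniq ?isperm_uniq //.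
  move=> x y /hd hx /hd hy /= e; nlia.
- apply/allP => y /mapP [x hx ->]; have := hd x hx.
  have := isperm_lt H (mem_drop hx); nlia.
Qed.

Lemma isperm_skL s k : isperm s -> k <= size s -> skewsplit s k -> isperm (skL s k).
Proof.
move=> H hk /allP Hs.
rewrite ispermE /skL size_map size_takel //; apply/andP; split.
- rewrite map_inj_in_uniq ?take_uniq ?isperm_uniq //.
  move=> x y /Hs hx /Hs hy /= e; nlia.
- apply/allP => y /mapP [x hx ->]; have := Hs x hx.
  have := isperm_lt H (mem_take hx); nlia.
Qed.

Lemma isperm_skR s k : isperm s -> k <= size s -> skewsplit s k -> isperm (drop k s).
Proof.
move=> H hk Hs; have /allP hd := skewsplit_drop H hk Hs.
rewrite ispermE drop_uniq ?isperm_uniq //= size_drop; exact/allP.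
Qed.

Definition sumind (s : seq nat) := ~~ has (sumsplit s) (iota 1 (size s).-1).
Definition skewind (s : seq nat) := ~~ has (skewsplit s) (iota 1 (size s).-1).

Lemma mem_iota1 t n : (t \in iota 1 n.-1) = (0 < t < n).
Proof. rewrite mem_iota; nlia. Qed.

Lemma all_take_nth (P : pred nat) (s : seq nat) t i : all P (take t s) -> i < t -> i < size s ->
  P (nth 0 s i).
Proof.
move=> /allP H hi hs; rewrite -(nth_take 0 hi); apply: H; apply: mem_nth.
rewrite size_take_min; nlia.
Qed.

Lemma all_drop_nth (P : pred nat) (s : seq nat) t i : all P (drop t s) -> t <= i -> i < size s ->
  P (nth 0 s i).
Proof.
move=> /allP H hi hs; rewrite -(subnKC hi) -nth_drop; apply: H; apply: mem_nth.
rewrite size_drop; nlia.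
Qed.

Lemma skewind_dsum A B : isperm A -> isperm B -> 0 < size A -> 0 < size B ->
  skewind (dsum A B).
Proof.
move=> pA pB hA hB; apply/hasPn => t; rewrite mem_iota1 size_dsum => ht.
apply/negP => Hsk.
have pS := isperm_dsum pA pB.
have ht1 : t <= size (dsum A B) by rewrite size_dsum; nlia.
have hd := skewsplit_drop pS ht1 Hsk.
have ht2 : 0 < t by nlia.
have ht3 : 0 < size (dsum A B) by rewrite size_dsum; nlia.
have h1 := all_take_nth Hsk ht2 ht3.
have ht4 : t <= size A + size B - 1 by nlia.
have ht5 : size A + size B - 1 < size (dsum A B) by rewrite size_dsum; nlia.
have h2 := all_drop_nth hd ht4 ht5.
rewrite /= size_dsum nth_dsumL // in h1.
rewrite /= size_dsum nth_dsumR in h2; try nlia.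
have := isperm_lt pA (mem_nth 0 hA).
nlia.
Qed.

Lemma sumind_ssum A B : isperm A -> isperm B -> 0 < size A -> 0 < size B ->
  sumind (ssum A B).
Proof.
move=> pA pB hA hB; apply/hasPn => t; rewrite mem_iota1 size_ssum => ht.
apply/negP => Hsk.
have pS := isperm_ssum pA pB.
have ht1 : t <= size (ssum A B) by rewrite size_ssum; nlia.
have /= hd := sumsplit_drop pS ht1 Hsk.
have ht2 : 0 < t by nlia.
have ht3 : 0 < size (ssum A B) by rewrite size_ssum; nlia.
have /= h1 := all_take_nth Hsk ht2 ht3.
have ht4 : t <= size A + size B - 1 by nlia.
have ht5 : size A + size B - 1 < size (ssum A B) by rewrite size_ssum; nlia.
have /= h2 := all_drop_nth hd ht4 ht5.
rewrite nth_ssumL // in h1.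
rewrite nth_ssumR in h2; try nlia.
have hh : size A + size B - 1 - size A < size B by nlia.
have := isperm_lt pB (mem_nth 0 hh).
nlia.
Qed.

Lemma ssum_nosplit A B t : skewind B -> size A < t -> t < size A + size B ->
  ~~ skewsplit (ssum A B) t.
Proof.
move=> HB h1 h2; apply/negP; rewrite /skewsplit size_ssum /ssum take_cat size_map ltnNge.
rewrite (ltnW h1) /= all_cat => /andP [_ H].
move/hasPn: HB => /(_ (t - size A)); rewrite mem_iota1 => /(_ _)/negP; apply; first nlia.
move: H; rewrite /skewsplit; apply: sub_all => x /=; nlia.
Qed.

Lemma skewsplit_add s k t : skewsplit s k -> k <= size s ->
  skewsplit (drop k s) t -> skewsplit s (k + t).
Proof.
rewrite /skewsplit size_drop takeD all_cat => H1 hk H2; apply/andP; split.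
- by move: H1; apply: sub_all => x /=; nlia.
- by move: H2; apply: sub_all => x /=; nlia.
Qed.

Lemma dsum_sumsplitA A B t : t < size A -> sumsplit (dsum A B) t -> sumsplit A t.
Proof. by move=> h; rewrite /sumsplit /dsum take_cat h. Qed.

Lemma sumsplit_take s k t : t <= k -> sumsplit (take k s) t -> sumsplit s t.
Proof. by move=> h; rewrite /sumsplit take_takel. Qed.

Lemma index_ssum A B : 0 < size B -> index 0 (ssum A B) = size A + index 0 B.
Proof.
move=> hB; rewrite /ssum index_cat size_map.
case: ifP => // /mapP [x _ e]; nlia.
Qed.

Lemma index_dsum A B : 0 \in A -> index 0 (dsum A B) = index 0 A.
Proof. by move=> h; rewrite /dsum index_cat h. Qed.

Definition stdv v x := if v < x then x.-1 else x.

Lemma stdv_cases v x : x != v -> (x < v /\ stdv v x = x) \/ (v < x /\ stdv v x = x.-1).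
Proof. rewrite /stdv; case: ifP => h hx; [right|left]; split => //; nlia. Qed.

Lemma exists_nth_take (P : pred nat) (s : seq nat) t : t <= size s -> ~~ all P (take t s) ->
  exists2 i, i < t & ~~ P (nth 0 s i).
Proof.
move=> ht /allPn [x /(nthP 0) [i hi <-] hP]; rewrite size_takel // in hi.
by exists i => //; rewrite nth_take in hP.
Qed.

Lemma find_in_range (P : pred nat) (s : seq nat) a b : a <= b -> b <= size s ->
  count P (take a s) < count P (take b s) -> exists2 j, a <= j < b & P (nth 0 s j).
Proof.
move=> hab hb; rewrite -(subnKC hab) takeD count_cat -{1}(addn0 (count P (take a s))).
rewrite ltn_add2l -has_count => /hasP [x /(nthP 0) [j hj <-] hP].
rewrite size_takel in hj; last by rewrite size_drop; nlia.
exists (a + j); first by nlia.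
by rewrite nth_take // nth_drop in hP.
Qed.

Lemma count_lt_size (P : pred nat) (s : seq nat) i : i < size s -> ~~ P (nth 0 s i) ->
  count P s < size s.
Proof.
move=> hi hP; rewrite -(count_predC P s) -{1}(addn0 (count P s)) ltn_add2l -has_count.
by apply/hasP; exists (nth 0 s i); [apply: mem_nth|].
Qed.

Lemma count0_all (P : pred nat) (s : seq nat) : all (predC P) s -> count P s = 0.
Proof.
move=> H; apply/eqP; rewrite -leqn0 leqNgt -has_count; apply/hasPn => x hx.
by have := allP H x hx.
Qed.

Lemma stdv_inj_in (s : seq nat) v : v \notin s -> {in s &, injective (stdv v)}.
Proof.
move=> hv x y hx hy.
have hx' : x != v by apply/eqP => e; move: hv; rewrite -e hx.
have hy' : y != v by apply/eqP => e; move: hv; rewrite -e hy.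
have := stdv_cases hx'; have := stdv_cases hy'; nlia.
Qed.

Lemma pat_rcons R (s : seq nat) v : pat R s -> pat R (rcons s v).
Proof. by move=> H; apply: (@pat_take _ _ (size s)); rewrite -cats1 take_size_cat. Qed.

Lemma nth_rconsL (s : seq nat) v i : i < size s -> nth 0 (rcons s v) i = nth 0 s i.
Proof. by move=> h; rewrite nth_rcons h. Qed.
Lemma nth_rconsR (s : seq nat) v : nth 0 (rcons s v) (size s) = v.
Proof. by rewrite nth_rcons ltnn eqxx. Qed.

Section Step.
Variables (s' : seq nat) (v : nat).
Let n := size s'.
Let s := rcons s' v.
Let s'' := map (stdv v) s'.
Hypothesis hn : 2 <= n.
Hypothesis ps : isperm s.
Hypothesis ss : sepl s.

Lemma size_s : size s = n.+1. Proof. by rewrite /s size_rcons. Qed.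

Lemma vnotin : v \notin s'.
Proof. by have := isperm_uniq ps; rewrite /s rcons_uniq => /andP []. Qed.

Lemma ne_v i : i < n -> nth 0 s' i != v.
Proof. move=> h; apply/eqP => e; have := vnotin; rewrite -e mem_nth //. Qed.

Lemma lt_s' x : x \in s' -> x < n.+1.
Proof. by move=> hx; rewrite -size_s; apply: isperm_lt => //; rewrite /s mem_rcons inE hx orbT. Qed.

Lemma v_lt : v < n.+1.
Proof. by rewrite -size_s; apply: isperm_lt => //; rewrite /s mem_rcons inE eqxx. Qed.

Lemma isperm_s'' : isperm s''.
Proof.
rewrite ispermE /s'' size_map map_inj_in_uniq; last exact: stdv_inj_in vnotin.
have := isperm_uniq ps; rewrite /s rcons_uniq => /andP [_ ->] /=.
apply/allP => y /mapP [x hx ->].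
have hx' : x != v by apply/eqP => e; have := vnotin; rewrite -e hx.
have := lt_s' hx; have := v_lt; have := stdv_cases hx'; rewrite -/n; nlia.
Qed.

Lemma size_s'' : size s'' = n. Proof. by rewrite size_map. Qed.

Lemma nth_s'' i : i < n -> nth 0 s'' i = stdv v (nth 0 s' i).
Proof. by move=> h; rewrite (nth_map 0). Qed.

Lemma occ_contra R i j k : (R = R2413 \/ R = R3142) -> occ R s i j k n -> False.
Proof.
move=> HR H; move: ss; rewrite /sepl.
have hp : pat R s by apply/patP; exists i, j, k, n.
by case: HR => e; rewrite -e hp ?andbF.
Qed.

Lemma step_sum : has (sumsplit s'') (iota 1 n.-1) -> ~~ sumind s || ~~ skewind s.
Proof.
move=> /hasP [k0 hk0 Hk0].
have ex : exists k, (0 < k < n) && sumsplit s'' k.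
  by exists k0; rewrite Hk0 andbT -mem_iota1.
case: (ex_minnP ex) => k /andP [hk Hk] Hmin.
have hs'' := isperm_s''.
case: (leqP k v) => hkv.
  apply/orP; left; rewrite negbK; apply/hasP; exists k; first by rewrite mem_iota1 size_s; nlia.
  rewrite /sumsplit /s -cats1 takel_cat; last by rewrite -/n; nlia.
  apply/allP => x hx; have hx' : x \in s' := mem_take hx.
  have hxv : x != v by apply/eqP => e; have := vnotin; rewrite -e hx'.
  move: Hk; rewrite /sumsplit /s'' -map_take => /allP /(_ (stdv v x)) /(_ (map_f _ hx)).
  have := stdv_cases hxv; nlia.
case: (posnP v) => hv0.
  apply/orP; right; rewrite negbK; apply/hasP; exists n; first by rewrite mem_iota1 size_s; nlia.
  rewrite /skewsplit size_s /s -cats1 take_size_cat //.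
  apply/allP => x hx; have hxv : x != v by apply/eqP => e; have := vnotin; rewrite -e hx.
  nlia.
exfalso.
have nsv : ~~ sumsplit s'' v.
  by apply/negP => hsv; have := Hmin v; rewrite hsv andbT; nlia.
have hvn : v <= size s'' by rewrite size_s''; nlia.
have [i hi Hi] := exists_nth_take hvn nsv.
have hkn : k <= size s'' by rewrite size_s''; nlia.
have c1 : count (fun x => x < v) (take k s'') = v.
  have e := isperm_count (fun x => x < v) hs''.
  have e2 : count (fun x => x < v) (drop k s'') = 0.
    apply: count0_all; apply: sub_all (sumsplit_drop hs'' hkn Hk) => x /=; nlia.
  rewrite -(cat_take_drop k s'') count_cat e2 addn0 count_iota_lt size_cat size_takel // size_drop in e.
  rewrite e size_s''; nlia.
have c2 : count (fun x => x < v) (take v s'') < v.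
  have hi' : i < size (take v s'') by rewrite size_takel.
  have hP : ~~ ((fun x => x < v) (nth 0 (take v s'') i)) by rewrite nth_take.
  by have := @count_lt_size (fun x => x < v) _ _ hi' hP; rewrite size_takel.
have [j /andP [hj1 hj2] Hj] : exists2 j, v <= j < k & nth 0 s'' j < v.
  by apply: (@find_in_range (fun x => x < v)); [nlia | done | nlia].
have Hp := all_drop_nth (sumsplit_drop hs'' hkn Hk) (leqnn k) (_ : k < size s'').
have Hi2 := all_take_nth Hk (_ : i < k) (_ : i < size s'').
rewrite size_s'' in Hp Hi2.
have hkn' : k < n by nlia.
have hin : i < n by nlia.
have hjn : j < n by nlia.
have hik : i < k by nlia.
have := Hp hkn'; have := Hi2 hik hin.
move: Hi Hj; rewrite /= !nth_s'' //.
have := stdv_cases (ne_v hin); have := stdv_cases (ne_v hjn); have := stdv_cases (ne_v hkn').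
move=> ck cj ci Hj Hi Hi' Hp'.
apply: (@occ_contra R3142 i j k); first by right.
rewrite /occ size_s; rewrite /n nth_rconsR !nth_rconsL -/n // /R3142; nlia.
Qed.

Lemma step_skew : has (skewsplit s'') (iota 1 n.-1) -> ~~ sumind s || ~~ skewind s.
Proof.
move=> /hasP [k0 hk0 Hk0].
have ex : exists k, (0 < k < n) && skewsplit s'' k.
  by exists k0; rewrite Hk0 andbT -mem_iota1.
case: (ex_minnP ex) => k /andP [hk Hk] Hmin.
have hs'' := isperm_s''.
case: (leqP v (n - k)) => hkv.
  apply/orP; right; rewrite negbK; apply/hasP; exists k; first by rewrite mem_iota1 size_s; nlia.
  rewrite /skewsplit size_s /s -cats1 takel_cat; last by rewrite -/n; nlia.
  apply/allP => x hx; have hx' : x \in s' := mem_take hx.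
  have hxv : x != v by apply/eqP => e; have := vnotin; rewrite -e hx'.
  move: Hk; rewrite /skewsplit size_s'' /s'' -map_take => /allP /(_ (stdv v x)) /(_ (map_f _ hx)).
  have := stdv_cases hxv; nlia.
have hvn1 := v_lt.
case: (ltnP v n) => hv0; last first.
  apply/orP; left; rewrite negbK; apply/hasP; exists n; first by rewrite mem_iota1 size_s; nlia.
  rewrite /sumsplit /s -cats1 take_size_cat //.
  apply/allP => x hx; have hxv : x != v by apply/eqP => e; have := vnotin; rewrite -e hx.
  have := lt_s' hx; nlia.
exfalso.
have nsv : ~~ skewsplit s'' (n - v).
  by apply/negP => hsv; have := Hmin (n - v); rewrite hsv andbT; nlia.
have hvn : n - v <= size s'' by rewrite size_s''; nlia.
have [i hi Hi] := exists_nth_take hvn nsv.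
rewrite size_s'' in Hi.
have hkn : k <= size s'' by rewrite size_s''; nlia.
have c1 : count (fun x => v <= x) (take k s'') = n - v.
  have e := isperm_count (fun x => v <= x) hs''.
  have e2 : count (fun x => v <= x) (drop k s'') = 0.
    apply: count0_all; apply: sub_all (skewsplit_drop hs'' hkn Hk) => x /=.
    rewrite size_s''; nlia.
  rewrite -(cat_take_drop k s'') count_cat e2 addn0 count_iota_ge size_cat size_takel // size_drop in e.
  rewrite e size_s''; nlia.
have c2 : count (fun x => v <= x) (take (n - v) s'') < n - v.
  have hi' : i < size (take (n - v) s'') by rewrite size_takel.
  have hP : ~~ ((fun x => v <= x) (nth 0 (take (n - v) s'') i)) by rewrite nth_take //; nlia.
  by have := @count_lt_size (fun x => v <= x) _ _ hi' hP; rewrite size_takel.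
have [j /andP [hj1 hj2] Hj] : exists2 j, n - v <= j < k & v <= nth 0 s'' j.
  by apply: (@find_in_range (fun x => v <= x)); [nlia | done | nlia].
have Hp := all_drop_nth (skewsplit_drop hs'' hkn Hk) (leqnn k) (_ : k < size s'').
have Hi2 := all_take_nth Hk (_ : i < k) (_ : i < size s'').
rewrite /= size_s'' in Hp Hi2.
have hkn' : k < n by nlia.
have hin : i < n by nlia.
have hjn : j < n by nlia.
have hik : i < k by nlia.
have := Hp hkn'; have := Hi2 hik hin.
move: Hi Hj; rewrite /= !nth_s'' //.
have := stdv_cases (ne_v hin); have := stdv_cases (ne_v hjn); have := stdv_cases (ne_v hkn').
move=> ck cj ci Hj Hi Hi' Hp'.
apply: (@occ_contra R2413 i j k); first by left.
rewrite /occ size_s; rewrite /n nth_rconsR !nth_rconsL -/n // /R2413; nlia.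
Qed.

End Step.

Theorem decomp n : forall s, size s = n -> isperm s -> 2 <= n -> sepl s ->
  ~~ sumind s || ~~ skewind s.
Proof.
elim: n => [|n IH] s; first by [].
case/lastP: s => [|s' v] //; rewrite size_rcons => [[hn]] ps hn2 ss.
case: (leqP n 1) => hn1.
  have hs1 : size s' = 1 by nlia.
  case: s' hs1 {hn} ps ss => [|x [|y r]] //= _ ps ss.
  rewrite /sumind /skewind /= /sumsplit /skewsplit /=.
  nlia.
have h2 : 2 <= size s' by nlia.
have hs'' := isperm_s'' h2 ps ss.
have ss'' : sepl (map (stdv v) s').
  have mono : forall x y, x \in s' -> y \in s' -> x < y -> stdv v x < stdv v y.
    move=> x y hx hy hxy.
    have nv := vnotin ps.
    have hx' : x != v by apply/eqP => e; move: nv; rewrite -e hx.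
    have hy' : y != v by apply/eqP => e; move: nv; rewrite -e hy.
    have := stdv_cases hx'; have := stdv_cases hy'; nlia.
  move: ss; rewrite /sepl !pat_map //; try exact: Rinv2413; try exact: Rinv3142.
  by apply: contraTT => /nandP [] /negPn /(pat_rcons v) ->; rewrite ?andbF.
have := IH _ (etrans (size_s'' s' v) hn) hs'' hn1 ss''.
case/orP => /negPn H; rewrite size_map in H.
- exact: (step_sum h2 ps ss).
- exact: (step_skew h2 ps ss).
Qed.

Definition perms n := permutations (iota 0 n).

Lemma mem_perms n (s : seq nat) : (s \in perms n) = isperm s && (size s == n).
Proof.
rewrite /perms mem_permutations; apply/idP/andP.
- move=> H; have hs := perm_size H; rewrite size_iota in hs.
  by split; [rewrite /isperm hs | apply/eqP].
- by move=> [H /eqP <-].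
Qed.

Lemma uniq_perms n : uniq (perms n). Proof. exact: permutations_uniq. Qed.

Definition at0 l (s : seq nat) := (0 \in s) && ((index 0 s).+1 == l).

Definition cnt n := count sepl (perms n).
Definition cG n l := count (fun s => sepl s && at0 l s) (perms n).
Definition cP n l := count (fun s => [&& sepl s, skewind s & at0 l s]) (perms n).
Definition cQ n l := count (fun s => [&& sepl s, sumind s & at0 l s]) (perms n).

Lemma count_bij (T U : eqType) (X : seq T) (Y : seq U) (pX : pred T) (pY : pred U)
  (f : T -> U) (g : U -> T) : uniq X -> uniq Y ->
  (forall x, x \in X -> pX x -> [/\ f x \in Y, pY (f x) & g (f x) = x]) ->
  (forall y, y \in Y -> pY y -> [/\ g y \in X, pX (g y) & f (g y) = y]) ->
  count pX X = count pY Y.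
Proof.
move=> uX uY H1 H2; rewrite -!size_filter.
have P : perm_eq (map f (filter pX X)) (filter pY Y).
  apply: uniq_perm; last 1 first.
  - move=> y; apply/mapP/idP.
    + move=> [x]; rewrite mem_filter => /andP [hp hx] ->.
      by have [h1 h2 _] := H1 x hx hp; rewrite mem_filter h1 h2.
    + rewrite mem_filter => /andP [hp hy]; have [h1 h2 h3] := H2 y hy hp.
      by exists (g y) => //; rewrite mem_filter h1 h2.
  - rewrite map_inj_in_uniq ?filter_uniq //.
    move=> x1 x2; rewrite !mem_filter => /andP [p1 m1] /andP [p2 m2] e.
    have [_ _ <-] := H1 x1 m1 p1; have [_ _ <-] := H1 x2 m2 p2; by rewrite e.
  - exact: filter_uniq.
by rewrite -(perm_size P) size_map.
Qed.

Lemma sum_eqb (T : eqType) (r : seq T) (y : T) : uniq r -> y \in r ->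
  \sum_(b <- r) ((y == b) : nat) = 1.
Proof.
move=> ur yr; have <- : count_mem y r = 1 by rewrite count_uniq_mem // yr.
elim: (r) => [|z r' IH]; first by rewrite big_nil.
by rewrite big_cons /= IH eq_sym.
Qed.

Lemma count_partition (T : eqType) (p : pred T) (key : T -> nat) (r : seq nat) (s : seq T) :
  uniq r -> (forall x, x \in s -> p x -> key x \in r) ->
  count p s = \sum_(b <- r) count (fun x => p x && (key x == b)) s.
Proof.
move=> ur; elim: s => [|x s IH] H.
  by rewrite big1.
rewrite /= big_split /= -IH; last by move=> y hy; apply: H; rewrite inE hy orbT.
congr (_ + _); case: (boolP (p x)) => hp /=.
  by rewrite sum_eqb //; apply: H; rewrite ?inE ?eqxx.
by rewrite big1.
Qed.

Definition maxsk (s : seq nat) := \max_(k < size s | skewsplit s k) k.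

Lemma maxsk_spec s : 0 < size s ->
  [/\ skewsplit s (maxsk s), maxsk s < size s &
      forall t, maxsk s < t < size s -> ~~ skewsplit s t].
Proof.
move=> hs.
have h0 : 0 < #|[pred k : 'I_(size s) | skewsplit s k]|.
  apply/card_gt0P; exists (Ordinal hs); by rewrite inE /skewsplit take0.
have [i0 hi0 e] := eq_bigmax_cond (fun k : 'I_(size s) => nat_of_ord k) h0.
have e' : maxsk s = i0 by rewrite /maxsk -e; apply: eq_bigl => k; rewrite inE.
rewrite e'; split; [by move: hi0; rewrite inE | by [] | ].
move=> t /andP [h1 h2]; apply/negP => ht.
have := leq_bigmax_cond (P := fun k : 'I_(size s) => skewsplit s k)
  (F := fun k : 'I_(size s) => nat_of_ord k) (Ordinal h2) ht.
rewrite /= -/(maxsk s) e'; nlia.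
Qed.

Lemma maxsk_eq s k : k < size s -> skewsplit s k ->
  (forall t, k < t < size s -> ~~ skewsplit s t) -> maxsk s = k.
Proof.
move=> hk Hk Hmax; apply/eqP; rewrite eqn_leq; apply/andP; split.
- apply/bigmax_leqP => i hi; rewrite leqNgt; apply/negP => hlt.
  by have := Hmax i; rewrite hlt ltn_ord hi => /(_ isT).
- exact: (leq_bigmax_cond (P := fun k : 'I_(size s) => skewsplit s k)
    (F := fun k : 'I_(size s) => nat_of_ord k) (Ordinal hk) Hk).
Qed.

Lemma maxsk_index s : isperm s -> 0 \in s -> maxsk s <= index 0 s.
Proof.
move=> ps h0; have hs : 0 < size s by case: (s) h0.
have [Hk hk _] := maxsk_spec hs.
rewrite leqNgt; apply/negP => hlt.
have : 0 \in take (maxsk s) s by rewrite in_take.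
move: Hk; rewrite /skewsplit => /allP H /H; nlia.
Qed.

Lemma size_skL s k : k <= size s -> size (skL s k) = k.
Proof. by move=> h; rewrite size_map size_takel. Qed.

Lemma in_ssumR A B : 0 < size B -> (0 \in ssum A B) = (0 \in B).
Proof.
move=> hB; rewrite /ssum mem_cat; case: (boolP (0 \in map _ A)) => //= /mapP [x _ e]; nlia.
Qed.

Lemma uniq_pairs (X Y : seq (seq nat)) : uniq X -> uniq Y ->
  uniq [seq (x, y) | x <- X, y <- Y].
Proof. by move=> uX uY; apply: allpairs_uniq => // -[? ?] [? ?] _ _. Qed.

Lemma cG_b n l b : b < l ->
  count (fun s => [&& sepl s, at0 l s & maxsk s == b]) (perms n) = cnt b * cP (n - b) (l - b).
Proof.
move=> hbl.
rewrite /cnt /cP.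
set X := filter sepl (perms b).
set Y := filter (fun s => [&& sepl s, skewind s & at0 (l - b) s]) (perms (n - b)).
transitivity (count predT [seq (x, y) | x <- X, y <- Y]);
  last by rewrite count_predT size_allpairs !size_filter.
apply: (@count_bij _ _ _ _ _ _ (fun s => (skL s b, drop b s)) (fun p => ssum p.1 p.2)).
- exact: uniq_perms.
- by apply: uniq_pairs; apply: filter_uniq; apply: uniq_perms.
- move=> s; rewrite mem_perms => /andP [ps /eqP hsn] /and3P [ss /andP [h0 hl] /eqP hb].
  have hs : 0 < size s by case: (s) h0.
  have [Hk hk Hmax] := maxsk_spec hs; rewrite hb in Hk hk Hmax.
  have hk' := ltnW hk.
  have e := ssum_split ps hk' Hk.
  have pA := isperm_skL ps hk' Hk; have pB := isperm_skR ps hk' Hk.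
  have hB : 0 < size (drop b s) by rewrite size_drop; nlia.
  move: (ss); rewrite -{1}e sepl_ssum // => /andP [sA sB].
  rewrite /= e; split => //.
  apply: allpairs_f; rewrite mem_filter.
  + by rewrite sA mem_perms pA size_skL // eqxx.
  + rewrite sB mem_perms pB size_drop hsn eqxx /= andbT; apply/andP; split.
    * apply/hasPn => t; rewrite mem_iota1 => ht; apply/negP => Ht.
      have := Hmax (b + t); rewrite (skewsplit_add Hk hk' Ht); move: ht; rewrite size_drop; nlia.
    * have hidx : index 0 s = b + index 0 (drop b s) by rewrite -{1}e index_ssum // size_skL.
      have h0' : 0 \in drop b s by rewrite -(in_ssumR (skL s b)) // e.
      by rewrite /at0 h0' /=; move: hl; rewrite hidx; nlia.
- move=> y /allpairsP [[A' B'] [/= hA hB ->]] _ /=.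
  move: hA hB; rewrite !mem_filter !mem_perms /at0.
  move=> /andP [sA /andP [pA /eqP hA]] /andP [/and3P [sB iB /andP [h0 hl]] /andP [pB /eqP hB]].
  have hB0 : 0 < size B' by case: (B') h0.
  have hbn : b < n by nlia.
  rewrite /=; split.
  + by rewrite isperm_ssum // size_ssum hA hB; apply/eqP; nlia.
  + rewrite sepl_ssum // sA sB /= in_ssumR // h0 index_ssum // hA /=; apply/andP; split.
      by nlia.
    apply/eqP; apply: maxsk_eq.
    * by rewrite size_ssum; nlia.
    * by rewrite -hA; apply: skewsplit_ssum.
    * move=> t /andP [h1 h2]; apply: ssum_nosplit => //; rewrite ?hA //; move: h2; rewrite size_ssum; nlia.
  + by rewrite -hA ssumK1 ssumK2.
Qed.

Definition minsum (s : seq nat) := (find (sumsplit s) (iota 1 (size s).-1)).+1.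

Lemma minsum_spec s : has (sumsplit s) (iota 1 (size s).-1) ->
  [/\ 0 < minsum s < size s, sumsplit s (minsum s) &
      forall t, 0 < t < minsum s -> ~~ sumsplit s t].
Proof.
move=> H; have hf : find (sumsplit s) (iota 1 (size s).-1) < (size s).-1.
  by have := H; rewrite has_find size_iota.
have := nth_find 0 H; rewrite nth_iota // add1n => Hk.
split => //; first by rewrite /minsum; nlia.
move=> t /andP [h1 h2]; rewrite /minsum in h2.
have := @before_find _ 0 (sumsplit s) (iota 1 (size s).-1) t.-1.
rewrite nth_iota; last by nlia.
have -> : 1 + t.-1 = t by nlia.
by move=> ->; nlia.
Qed.

Lemma minsum_eq s k : 0 < k < size s -> sumsplit s k ->
  (forall t, 0 < t < k -> ~~ sumsplit s t) -> minsum s = k.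
Proof.
move=> hk Hk Hmin.
have H : has (sumsplit s) (iota 1 (size s).-1) by apply/hasP; exists k; rewrite ?mem_iota1.
have [h1 h2 h3] := minsum_spec H.
apply/eqP; rewrite eqn_leq; apply/andP; split.
- rewrite leqNgt; apply/negP => hlt; have := h3 k; rewrite hlt Hk; nlia.
- rewrite leqNgt; apply/negP => hlt; have := Hmin (minsum s); rewrite hlt h2; nlia.
Qed.

Lemma size_sumR s k : k <= size s -> size (sumR s k) = size s - k.
Proof. by move=> h; rewrite size_map size_drop. Qed.

Lemma cP_k n l k : 2 <= n -> k < n ->
  count (fun s => [&& sepl s, skewind s, at0 l s & minsum s == k]) (perms n) =
  cQ k l * cnt (n - k).
Proof.
move=> hn hkn.
rewrite /cnt /cQ.
set X := filter (fun s => [&& sepl s, sumind s & at0 l s]) (perms k).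
set Y := filter sepl (perms (n - k)).
transitivity (count predT [seq (x, y) | x <- X, y <- Y]);
  last by rewrite count_predT size_allpairs !size_filter.
apply: (@count_bij _ _ _ _ _ _ (fun s => (take k s, sumR s k)) (fun p => dsum p.1 p.2)).
- exact: uniq_perms.
- by apply: uniq_pairs; apply: filter_uniq; apply: uniq_perms.
- move=> s; rewrite mem_perms => /andP [ps /eqP hsn] /and4P [ss si /andP [h0 hl] /eqP hb].
  have hdec : has (sumsplit s) (iota 1 (size s).-1).
    have h2s : 2 <= size s by rewrite hsn.
    by have := decomp (erefl (size s)) ps h2s ss; rewrite si orbF negbK.
  have [/andP [hk1 hk2] Hk Hmin] := minsum_spec hdec; rewrite hb in hk1 hk2 Hk Hmin.
  have hk' := ltnW hk2.
  have e := dsum_split ps hk' Hk.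
  have pA := isperm_take ps hk' Hk; have pB := isperm_sumR ps hk' Hk.
  have hA : size (take k s) = k by rewrite size_takel.
  move: (ss); rewrite -{1}e sepl_dsum // => /andP [sA sB].
  rewrite /= e; split => //.
  apply: allpairs_f; rewrite mem_filter.
  + rewrite sA mem_perms pA hA eqxx /= andbT; apply/andP; split.
    * apply/hasPn => t; rewrite mem_iota1 hA => ht; apply/negP => Ht.
      have := Hmin t; rewrite (sumsplit_take _ Ht); first by move: ht; nlia.
      nlia.
    * have h0A : 0 \in take k s by apply: (isperm_mem pA); rewrite hA.
      rewrite /at0 h0A /=; move: hl; rewrite -{1}e index_dsum //.
  + by rewrite sB mem_perms pB size_sumR // hsn eqxx.
- move=> y /allpairsP [[A' B'] [/= hA hB ->]] _ /=.
  move: hA hB; rewrite !mem_filter !mem_perms /at0.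
  move=> /andP [/and3P [sA iA /andP [h0 hl]] /andP [pA /eqP hA]] /andP [sB /andP [pB /eqP hB]].
  have hA0 : 0 < size A' by case: (A') h0.
  have hB0 : 0 < size B' by rewrite hB; nlia.
  split.
  + by rewrite isperm_dsum // size_dsum hA hB; apply/eqP; nlia.
  + have h0s : 0 \in dsum A' B' by rewrite /dsum mem_cat h0.
    rewrite sepl_dsum // sA sB /= skewind_dsum // index_dsum // h0s hl /=.
    apply/eqP; apply: minsum_eq.
    * by rewrite size_dsum; nlia.
    * by rewrite -hA; apply: sumsplit_dsum.
    * move=> t /andP [h1 h2]; apply/negP => Ht.
      have := dsum_sumsplitA (_ : t < size A') Ht; rewrite hA => /(_ h2) Ht'.
      by move/hasPn: iA => /(_ t); rewrite mem_iota1 hA h1 h2 Ht' => /(_ isT).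
  + by rewrite -hA dsumK1 dsumK2.
Qed.

Definition Enl n l : nat := (n == 1) && (l == 1).

Lemma perms0 : perms 0 = [:: [::]]. Proof. by []. Qed.
Lemma perms1 : perms 1 = [:: [:: 0]]. Proof. by []. Qed.

Lemma at0_range n l s : s \in perms n -> at0 l s -> 0 < l <= n.
Proof.
rewrite mem_perms => /andP [_ /eqP <-] /andP [h0 /eqP <-].
by rewrite -index_mem in h0; nlia.
Qed.

Lemma count_false (T : eqType) (p : pred T) (s : seq T) :
  (forall x, x \in s -> p x -> False) -> count p s = 0.
Proof.
move=> H; rewrite -(count_pred0 s); apply: eq_in_count => x hx /=.
by apply/negP => /(H x hx).
Qed.

Lemma sum_iota_ord (F : nat -> nat) m : \sum_(b <- iota 0 m) F b = \sum_(b < m) F b.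
Proof. by rewrite -(big_mkord xpredT) /index_iota subn0. Qed.

Lemma cnt0 : cnt 0 = 1. Proof. by []. Qed.

Lemma cG_sum n l : cG n l = \sum_(b < n.+1) (if b < l then cnt b * cP (n - b) (l - b) else 0).
Proof.
rewrite /cG (@count_partition _ _ maxsk (iota 0 n.+1)) ?iota_uniq //; last first.
  move=> s hs /andP [_ ha]; move: (hs) (ha); rewrite mem_perms => /andP [ps /eqP hsn] /andP [h0 _].
  have := maxsk_index ps h0; rewrite -index_mem in h0; rewrite mem_iota; nlia.
rewrite sum_iota_ord; apply: eq_bigr => b _.
case: ifP => hb.
  by rewrite -cG_b //; apply: eq_count => s; rewrite andbA.
apply: count_false => s hs /andP [/andP [ss ha] /eqP hm].
move: (hs) (ha); rewrite mem_perms => /andP [ps _] /andP [h0 /eqP hl].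
have := maxsk_index ps h0; nlia.
Qed.

Lemma maxsk_pos_sumind s : isperm s -> 0 \in s -> 0 < maxsk s -> sumind s.
Proof.
move=> ps h0 hm; have hs : 0 < size s by case: (s) h0.
have [Hk hk _] := maxsk_spec hs.
have hk' := ltnW hk.
have e := ssum_split ps hk' Hk.
rewrite -e; apply: sumind_ssum.
- exact: isperm_skL.
- exact: isperm_skR.
- by rewrite size_skL.
- by rewrite size_drop; nlia.
Qed.

Lemma Q0 n l : count (fun s => [&& sepl s, sumind s & at0 l s] && (maxsk s == 0)) (perms n) = Enl n l.
Proof.
case: n => [|[|n]].
- by rewrite perms0 /= /at0.
- rewrite perms1 /= addn0 /Enl /=.
  have hm : maxsk [:: 0] = 0.
    by have [_ h _] := @maxsk_spec [:: 0] isT; move: h; rewrite /=; nlia.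
  by rewrite hm eqxx andbT /at0 inE eqxx /= eq_sym.
- rewrite /Enl /=; apply: count_false => s hs /andP [/and3P [ss si _] /eqP hm].
  move: hs; rewrite mem_perms => /andP [ps /eqP hsn].
  have h2s : 2 <= size s by rewrite hsn.
  have := decomp (erefl (size s)) ps h2s ss; rewrite si /= /skewind negbK => /hasP [t ht Ht].
  have hs : 0 < size s by nlia.
  have [_ _ Hmax] := maxsk_spec hs.
  by move: ht; rewrite mem_iota1 => ht; have := Hmax t; rewrite hm ht Ht => /(_ isT).
Qed.

Lemma cQ_sum n l : cQ n l = \sum_(b < n.+1)
  (if nat_of_ord b == 0 then Enl n l else if b < l then cnt b * cP (n - b) (l - b) else 0).
Proof.
rewrite /cQ (@count_partition _ _ maxsk (iota 0 n.+1)) ?iota_uniq //; last first.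
  move=> s hs /and3P [_ _ ha]; move: (hs) (ha); rewrite mem_perms => /andP [ps /eqP hsn] /andP [h0 _].
  have := maxsk_index ps h0; rewrite -index_mem in h0; rewrite mem_iota; nlia.
rewrite sum_iota_ord; apply: eq_bigr => b _.
case: eqP => [->|hb0]; first exact: Q0.
case: ifP => hb.
  rewrite -cG_b //; apply: eq_in_count => s hs /=.
  case: (boolP (maxsk s == b)) => [/eqP hm|]; last by rewrite !andbF.
  rewrite !andbT; case: (boolP (at0 l s)) => ha; rewrite ?andbF //.
  move: hs; rewrite mem_perms => /andP [ps _]; move: (ha) => /andP [h0 _].
  by rewrite maxsk_pos_sumind // hm; nlia.
apply: count_false => s hs /andP [/and3P [ss _ ha] /eqP hm].
move: (hs) (ha); rewrite mem_perms => /andP [ps _] /andP [h0 /eqP hl].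
have := maxsk_index ps h0; nlia.
Qed.

Lemma cQ0 l : cQ 0 l = 0. Proof. by rewrite /cQ perms0 /= /at0. Qed.
Lemma cP0 l : cP 0 l = 0. Proof. by rewrite /cP perms0 /= /at0. Qed.
Lemma cPn0 n : cP n 0 = 0.
Proof. by apply: count_false => s hs /and3P [_ _ /(at0_range hs)]. Qed.

Lemma cP_sum n l : cP n l = Enl n l + \sum_(k < n) cQ k l * cnt (n - k).
Proof.
case: n => [|[|n]].
- by rewrite cP0 big_ord0.
- rewrite big_ord1 cQ0 /cP perms1 /Enl /= /at0 /=.
  by rewrite eq_sym mul0n.
- rewrite /Enl /= add0n.
  rewrite /cP (@count_partition _ _ minsum (iota 0 n.+2)) ?iota_uniq //; last first.
    move=> s hs /and3P [ss si _]; move: hs; rewrite mem_perms => /andP [ps /eqP hsn].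
    have h2s : 2 <= size s by rewrite hsn.
    have := decomp (erefl (size s)) ps h2s ss; rewrite si orbF negbK => hd.
    have [/andP [h1 h2] _ _] := minsum_spec hd; rewrite mem_iota; nlia.
  rewrite sum_iota_ord; apply: eq_bigr => k _.
  rewrite -cP_k //; apply: eq_count => s; by rewrite !andbA.
Qed.

Definition tol n (s : 'S_n) : seq nat := [seq nat_of_ord (s i) | i <- enum 'I_n].

Lemma size_tol n (s : 'S_n) : size (tol s) = n.
Proof. by rewrite size_map size_enum_ord. Qed.

Lemma nth_tol n (s : 'S_n) (i : 'I_n) : nth 0 (tol s) i = s i.
Proof. by rewrite (nth_map i) ?size_enum_ord // nth_ord_enum. Qed.

Lemma isperm_tol n (s : 'S_n) : isperm (tol s).
Proof.
rewrite ispermE size_tol; apply/andP; split.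
- rewrite map_inj_uniq ?enum_uniq // => i j /val_inj; exact: perm_inj.
- by apply/allP => x /mapP [i _ ->].
Qed.

Lemma tol_inj n : injective (@tol n).
Proof.
move=> s t e; apply/permP => i; apply: ord_inj.
by rewrite -!nth_tol e.
Qed.

Lemma tol_surj n (t : seq nat) : isperm t -> size t = n -> exists s : 'S_n, tol s = t.
Proof.
move=> pt hn.
pose f := fun i : 'I_n => insubd i (nth 0 t i).
have hf : forall i : 'I_n, val (f i) = nth 0 t i.
  move=> i; have hlt : nth 0 t i < size t by apply: isperm_lt => //; apply: mem_nth; rewrite hn.
  by rewrite hn in hlt; rewrite val_insubd hlt.
have finj : injective f.
  move=> i j e; apply: val_inj; apply/eqP.
  have := congr1 val e; rewrite !hf => /eqP.
  by rewrite nth_uniq ?isperm_uniq // hn.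
exists (perm finj); apply: (@eq_from_nth _ 0); first by rewrite size_tol.
move=> i; rewrite size_tol => hi.
by rewrite (nth_tol _ (Ordinal hi)) permE hf.
Qed.

Lemma count_inj (T U : eqType) (X : seq T) (Y : seq U) (pX : pred T) (pY : pred U) (f : T -> U) :
  uniq X -> uniq Y -> {in [seq x <- X | pX x] &, injective f} ->
  (forall x, x \in X -> pX x -> f x \in Y /\ pY (f x)) ->
  (forall y, y \in Y -> pY y -> exists2 x, (x \in X) && pX x & f x = y) ->
  count pX X = count pY Y.
Proof.
move=> uX uY finj H1 H2; rewrite -!size_filter.
have P : perm_eq (map f (filter pX X)) (filter pY Y).
  apply: uniq_perm; last 1 first.
  - move=> y; apply/mapP/idP.
    + move=> [x]; rewrite mem_filter => /andP [hp hx] ->.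
      by have [h1 h2] := H1 x hx hp; rewrite mem_filter h1 h2.
    + rewrite mem_filter => /andP [hp hy]; have [x /andP [h1 h2] h3] := H2 y hy hp.
      by exists x => //; rewrite mem_filter h1 h2.
  - by rewrite map_inj_in_uniq ?filter_uniq.
  - exact: filter_uniq.
by rewrite -(perm_size P) size_map.
Qed.

Definition o4 (k : nat) (h : k < 4) : 'I_4 := Ordinal h.

Lemma contains_2413 n (s : 'S_n) : contains_pattern [:: 2; 4; 1; 3] s = pat R2413 (tol s).
Proof.
apply/existsP/patP.
- move=> [f /forallP H].
  have Hab := fun a b => (forallP (H a)) b.
  have h01 := Hab (o4 (isT : 0 < 4)) (o4 (isT : 1 < 4)).
  have h12 := Hab (o4 (isT : 1 < 4)) (o4 (isT : 2 < 4)).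
  have h23 := Hab (o4 (isT : 2 < 4)) (o4 (isT : 3 < 4)).
  have h20 := Hab (o4 (isT : 2 < 4)) (o4 (isT : 0 < 4)).
  have h03 := Hab (o4 (isT : 0 < 4)) (o4 (isT : 3 < 4)).
  have h31 := Hab (o4 (isT : 3 < 4)) (o4 (isT : 1 < 4)).
  move: h01 h12 h23 h20 h03 h31 => /=.
  set f0 := f (o4 _); set f1 := f (o4 _); set f2 := f (o4 _); set f3 := f (o4 _).
  move=> h01 h12 h23 h20 h03 h31.
  exists f0, f1, f2, f3; rewrite /occ size_tol !nth_tol /R2413 ltn_ord.
  move: h01 h12 h23 h20 h03 h31; nlia.
- move=> [i [j [k [l /and5P [h1 h2 h3 h4 hR]]]]].
  rewrite size_tol in h4.
  have hi : i < n by nlia. have hj : j < n by nlia. have hk : k < n by nlia.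
  pose oi := Ordinal hi; pose oj := Ordinal hj; pose ok := Ordinal hk; pose ol := Ordinal h4.
  have ei := nth_tol s oi; have ej := nth_tol s oj; have ek := nth_tol s ok;
    have el := nth_tol s ol.
  rewrite /= in ei ej ek el; rewrite ei ej ek el /R2413 in hR.
  exists [ffun a : 'I_4 => nth oi [:: oi; oj; ok; ol] a].
  apply/forallP => a; apply/forallP => b; rewrite !ffunE.
  case: a => [[|[|[|[|a]]]] ha] //; case: b => [[|[|[|[|b]]]] hb] //=; nlia.
Qed.

Lemma contains_3142 n (s : 'S_n) : contains_pattern [:: 3; 1; 4; 2] s = pat R3142 (tol s).
Proof.
apply/existsP/patP.
- move=> [f /forallP H].
  have Hab := fun a b => (forallP (H a)) b.
  have h01 := Hab (o4 (isT : 0 < 4)) (o4 (isT : 1 < 4)).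
  have h12 := Hab (o4 (isT : 1 < 4)) (o4 (isT : 2 < 4)).
  have h23 := Hab (o4 (isT : 2 < 4)) (o4 (isT : 3 < 4)).
  have h20 := Hab (o4 (isT : 1 < 4)) (o4 (isT : 3 < 4)).
  have h03 := Hab (o4 (isT : 3 < 4)) (o4 (isT : 0 < 4)).
  have h31 := Hab (o4 (isT : 0 < 4)) (o4 (isT : 2 < 4)).
  move: h01 h12 h23 h20 h03 h31 => /=.
  set f0 := f (o4 _); set f1 := f (o4 _); set f2 := f (o4 _); set f3 := f (o4 _).
  move=> h01 h12 h23 h20 h03 h31.
  exists f0, f1, f2, f3; rewrite /occ size_tol !nth_tol /R3142 ltn_ord.
  move: h01 h12 h23 h20 h03 h31; nlia.
- move=> [i [j [k [l /and5P [h1 h2 h3 h4 hR]]]]].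
  rewrite size_tol in h4.
  have hi : i < n by nlia. have hj : j < n by nlia. have hk : k < n by nlia.
  pose oi := Ordinal hi; pose oj := Ordinal hj; pose ok := Ordinal hk; pose ol := Ordinal h4.
  have ei := nth_tol s oi; have ej := nth_tol s oj; have ek := nth_tol s ok;
    have el := nth_tol s ol.
  rewrite /= in ei ej ek el; rewrite ei ej ek el /R3142 in hR.
  exists [ffun a : 'I_4 => nth oi [:: oi; oj; ok; ol] a].
  apply/forallP => a; apply/forallP => b; rewrite !ffunE.
  case: a => [[|[|[|[|a]]]] ha] //; case: b => [[|[|[|[|b]]]] hb] //=; nlia.
Qed.

Lemma separable_tol n (s : 'S_n) : separable s = sepl (tol s).
Proof. by rewrite /separable /avoids contains_2413 contains_3142. Qed.

Lemma at0_tol n (s : 'S_n) l :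
  [exists i : 'I_n, (i.+1 == l) && (val (s i) == 0)] = at0 l (tol s).
Proof.
have ut := isperm_uniq (isperm_tol s).
apply/existsP/andP.
- move=> [i /andP [/eqP hl /eqP h0]].
  have e : nth 0 (tol s) i = 0 by rewrite nth_tol.
  have hi : i < size (tol s) by rewrite size_tol.
  split; first by rewrite -e mem_nth.
  by rewrite -e index_uniq // hl.
- move=> [h0 /eqP hl].
  have hi : index 0 (tol s) < n.
    have h1 : index 0 (tol s) < size (tol s) by rewrite index_mem.
    by rewrite size_tol in h1.
  exists (Ordinal hi); rewrite /= hl eqxx /=.
  by rewrite -(nth_tol s (Ordinal hi)) /= nth_index.
Qed.

Lemma sep_count_cnt n : sep_count n = cnt n.
Proof.
rewrite /sep_count /cnt cardE -(count_predT (enum _)).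
apply: (@count_inj _ _ _ _ _ _ (@tol n)).
- exact: enum_uniq.
- exact: uniq_perms.
- by move=> x y _ _; apply: tol_inj.
- move=> s; rewrite mem_enum inE => hs _.
  by rewrite mem_perms isperm_tol size_tol eqxx -separable_tol.
- move=> t; rewrite mem_perms => /andP [pt /eqP ht] st.
  have [s es] := tol_surj pt ht; exists s => //.
  by rewrite mem_enum inE separable_tol es st.
Qed.

Lemma sep_count_at_cG n l : sep_count_at n l = cG n l.
Proof.
rewrite /sep_count_at /cG cardE -(count_predT (enum _)).
apply: (@count_inj _ _ _ _ _ _ (@tol n)).
- exact: enum_uniq.
- exact: uniq_perms.
- by move=> x y _ _; apply: tol_inj.
- move=> s; rewrite mem_enum inE => /andP [hs ha] _.
  by rewrite mem_perms isperm_tol size_tol eqxx -separable_tol hs -at0_tol.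
- move=> t; rewrite mem_perms => /andP [pt /eqP ht] /andP [st ha].
  have [s es] := tol_surj pt ht; exists s => //.
  by rewrite mem_enum inE separable_tol at0_tol es st ha.
Qed.
Import GRing.Theory Num.Theory.

Local Open Scope ring_scope.

Definition cf (p : {poly {poly int}}) : bser := fun n l => (p`_n)`_l.
Definition phi N (F : bser) : {poly {poly int}} := \poly_(i < N.+1) \poly_(j < N.+1) F i j.
Definition exu : {poly {poly int}} := 'X * ('X)%:P.

Lemma cf_phi N F n l : (n <= N)%N -> (l <= N)%N -> cf (phi N F) n l = F n l.
Proof. by move=> hn hl; rewrite /cf /phi coef_poly ltnS hn coef_poly ltnS hl. Qed.

Lemma cf_mul p q n l : cf (p * q) n l = bser_mul (cf p) (cf q) n l.
Proof.
rewrite /cf /bser_mul coefM coef_sum; apply: eq_bigr => i _.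
by rewrite coefM.
Qed.

Lemma cf_add p q n l : cf (p + q) n l = cf p n l + cf q n l.
Proof. by rewrite /cf !coefD. Qed.
Lemma cf_sub p q n l : cf (p - q) n l = cf p n l - cf q n l.
Proof. by rewrite /cf !coefB. Qed.

Lemma cf_xu p n l : cf (exu * p) n l = bser_mul_xu (cf p) n l.
Proof.
rewrite /cf /exu -mulrA coefXM; case: n => [|n] /=; first by rewrite coef0.
rewrite coefCM coefXM; case: l => [|l] //=.
Qed.

Lemma cf_one n l : cf 1 n l = ((n == 0%N) && (l == 0%N))%:R.
Proof.
rewrite /cf coef1; case: (n == 0%N) => /=; last by rewrite coef0.
by rewrite coef1.
Qed.

Definition eqN N (p q : {poly {poly int}}) :=
  forall n l, (n <= N)%N -> (l <= N)%N -> cf p n l = cf q n l.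

Lemma eqN_refl N p : eqN N p p. Proof. by []. Qed.
Lemma eqN_eq N p q : p = q -> eqN N p q. Proof. by move=> ->. Qed.
Lemma eqN_sym N p q : eqN N p q -> eqN N q p.
Proof. by move=> H n l hn hl; rewrite H. Qed.
Lemma eqN_trans N p q r : eqN N p q -> eqN N q r -> eqN N p r.
Proof. by move=> H1 H2 n l hn hl; rewrite H1 // H2. Qed.
Lemma eqN_add N p q p' q' : eqN N p p' -> eqN N q q' -> eqN N (p + q) (p' + q').
Proof. by move=> H1 H2 n l hn hl; rewrite !cf_add H1 // H2. Qed.
Lemma eqN_sub N p q p' q' : eqN N p p' -> eqN N q q' -> eqN N (p - q) (p' - q').
Proof. by move=> H1 H2 n l hn hl; rewrite !cf_sub H1 // H2. Qed.
Lemma eqN_mulr N r p q : eqN N p q -> eqN N (r * p) (r * q).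
Proof.
move=> H n l hn hl; rewrite !cf_mul /bser_mul; apply: eq_bigr => i _; apply: eq_bigr => j _.
have h1 : (n - i <= N)%N := leq_trans (leq_subr _ _) hn.
have h2 : (l - j <= N)%N := leq_trans (leq_subr _ _) hl.
by rewrite H.
Qed.
Lemma eqN_mull N r p q : eqN N p q -> eqN N (p * r) (q * r).
Proof. by move=> H; rewrite ![_ * r]mulrC; apply: eqN_mulr. Qed.

Lemma bser_mul_phi N F G n l : (n <= N)%N -> (l <= N)%N ->
  bser_mul F G n l = cf (phi N F * phi N G) n l.
Proof.
move=> hn hl; rewrite cf_mul /bser_mul; apply: eq_bigr => i _; apply: eq_bigr => j _.
have hi : (i <= N)%N by apply: leq_trans hn; rewrite -ltnS.
have hj : (j <= N)%N by apply: leq_trans hl; rewrite -ltnS.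
have h1 : (n - i <= N)%N := leq_trans (leq_subr _ _) hn.
have h2 : (l - j <= N)%N := leq_trans (leq_subr _ _) hl.
by rewrite !cf_phi.
Qed.

Lemma eqN_phi_mul N F G : eqN N (phi N (bser_mul F G)) (phi N F * phi N G).
Proof. by move=> n l hn hl; rewrite cf_phi // (@bser_mul_phi N). Qed.
Lemma eqN_phi_add N F G : eqN N (phi N (bser_add F G)) (phi N F + phi N G).
Proof. by move=> n l hn hl; rewrite cf_add !cf_phi. Qed.
Lemma eqN_phi_sub N F G : eqN N (phi N (bser_sub F G)) (phi N F - phi N G).
Proof. by move=> n l hn hl; rewrite cf_sub !cf_phi. Qed.
Lemma eqN_phi_ext N F G : (forall n l, F n l = G n l) -> eqN N (phi N F) (phi N G).
Proof. by move=> H n l hn hl; rewrite !cf_phi. Qed.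

Definition one : bser := fun n l => ((n == 0%N) && (l == 0%N))%:R.
Definition Ebs : bser := fun n l => ((n == 1%N) && (l == 1%N))%:R.

Lemma eqN_one N : eqN N (phi N one) 1.
Proof. by move=> n l hn hl; rewrite cf_phi // cf_one. Qed.

Lemma eqN_E N : eqN N (phi N Ebs) exu.
Proof.
move=> n l hn hl; rewrite cf_phi // -(mulr1 exu) cf_xu /Ebs.
by case: n {hn} => [|[|n]] //; case: l {hl} => [|[|l]] //=; rewrite cf_one.
Qed.

Local Open Scope ring_scope.

Lemma Posz_sum m (F : 'I_m -> nat) : Posz (\sum_(i < m) F i)%N = \sum_(i < m) Posz (F i).
Proof. by rewrite -natz natr_sum; apply: eq_bigr => i _; rewrite natz. Qed.

Lemma inner_pick (f : nat -> int) (c : int) (i l : nat) :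
  \sum_(j < l.+1) (if (j : nat) == i then c else 0) * f j = if (i <= l)%N then c * f i else 0.
Proof.
case: (leqP i l) => h.
  rewrite (bigD1 (Ordinal (h : (i < l.+1)%N))) //= eqxx big1 ?addr0 //.
  by move=> j /negbTE; rewrite -val_eqE /= => ->; rewrite mul0r.
rewrite big1 // => j _; have hj := ltn_ord j.
have -> : ((j : nat) == i) = false by apply/negbTE; rewrite neq_ltn; apply/orP; left; nlia.
by rewrite mul0r.
Qed.

Lemma inner_last (f : nat -> int) (c : int) (l : nat) :
  \sum_(j < l.+1) f j * (if (l - j == 0)%N then c else 0) = f l * c.
Proof.
rewrite big_ord_recr /= subnn eqxx big1 ?add0r // => j _.
have hj := ltn_ord j.
have -> : (l - widen_ord (leqnSn l) j == 0)%N = false by apply/negbTE; rewrite /=; nlia.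
by rewrite mulr0.
Qed.

Lemma cG_zero n l : ~~ (0 < l <= n)%N -> cG n l = 0%N.
Proof.
move=> h; apply: count_false => s hs /andP [_ /(at0_range hs) h']; by rewrite h' in h.
Qed.

Lemma gxu_G n l : gxu n l = Posz (cG n l).
Proof.
rewrite /gxu sep_count_at_cG; case: ifP => // h.
by rewrite cG_zero // h.
Qed.

Lemma Sxu_one p q : bser_sub Sxu one p q =
  if q == p then (if p == 0%N then 0 else Posz (cnt p)) else 0.
Proof.
rewrite /bser_sub /Sxu /one sep_count_cnt.
have [-> | hq] := eqVneq q p.
- have [-> | hp] := eqVneq p 0%N; first by rewrite cnt0 /= subrr.
  by rewrite /= subr0.
- have -> : ((p == 0%N) && (q == 0%N)) = false by apply/negbTE; nlia.
  by rewrite /= subr0.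
Qed.

Lemma Sx_one p q : bser_sub Sx one p q =
  if (q == 0)%N then (if p == 0%N then 0 else Posz (cnt p)) else 0.
Proof.
rewrite /bser_sub /Sx /one sep_count_cnt.
have [hq0 | hq] := eqVneq q 0%N.
- have [hp0 | hp] := eqVneq p 0%N; first by rewrite hp0 cnt0 /= subrr.
  by rewrite /= subr0.
- by rewrite andbF /= subr0.
Qed.

Definition Gs : bser := fun n l => Posz (cG n l).
Definition Ps : bser := fun n l => Posz (cP n l).
Definition Qs : bser := fun n l => Posz (cQ n l).

Lemma G_id n l : gxu n l = bser_mul Sxu Ps n l.
Proof.
rewrite gxu_G cG_sum Posz_sum /bser_mul; apply: eq_bigr => i _.
rewrite /Sxu (inner_pick (fun j => Ps (n - i)%N (l - j)%N)) sep_count_cnt.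
case: (ltngtP i l) => h.
- by rewrite PoszM.
- by [].
- by rewrite h subnn /Ps cPn0 mulr0.
Qed.

Lemma inner_Sx (i n l : nat) : \sum_(j < l.+1) Qs i j * bser_sub Sx one (n - i)%N (l - j)%N =
  Qs i l * (if (n - i == 0)%N then 0 else Posz (cnt (n - i))).
Proof. rewrite -(inner_last (fun j => Qs i j)); apply: eq_bigr => j _; by rewrite Sx_one. Qed.

Lemma P_id n l : Ps n l = bser_add Ebs (bser_mul Qs (bser_sub Sx one)) n l.
Proof.
rewrite /Ps cP_sum PoszD Posz_sum /bser_add /bser_mul; congr (_ + _).
  by rewrite /Ebs /Enl; case: (_ && _).
under [in RHS]eq_bigr => i _ do rewrite inner_Sx.
rewrite big_ord_recr /= subnn eqxx mulr0 addr0; apply: eq_bigr => i _.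
have hi := ltn_ord i.
have -> : (n - i == 0)%N = false by apply/negbTE; nlia.
by rewrite PoszM.
Qed.

Lemma inner_Sxu (i n l : nat) :
  \sum_(j < l.+1) bser_sub Sxu one i j * Ps (n - i)%N (l - j)%N =
  if (i <= l)%N then (if i == 0%N then 0 else Posz (cnt i)) * Ps (n - i)%N (l - i)%N else 0.
Proof.
rewrite -(inner_pick (fun j => Ps (n - i)%N (l - j)%N)); apply: eq_bigr => j _.
by rewrite Sxu_one.
Qed.

Lemma Q_id n l : Qs n l = bser_add Ebs (bser_mul (bser_sub Sxu one) Ps) n l.
Proof.
rewrite /Qs cQ_sum Posz_sum /bser_add /bser_mul.
under [in RHS]eq_bigr => i _ do rewrite inner_Sxu.
rewrite big_ord_recl [in RHS]big_ord_recl /= mul0r add0r.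
rewrite /Ebs /Enl; congr (_ + _); first by case: (_ && _).
apply: eq_bigr => i _; rewrite /bump /= add1n.
case: (ltngtP i.+1 l) => h.
- by rewrite PoszM.
- by [].
- by rewrite h subnn /Ps cPn0 mulr0.
Qed.

Theorem main_thm :
  bser_mul gxu (bser_sub (bser_add Sx Sxu) (bser_mul Sx Sxu))
  = bser_mul_xu (bser_mul Sx Sxu).
Proof.
apply: functional_extensionality => n; apply: functional_extensionality => l.
pose N := maxn n l.
have hn : (n <= N)%N by rewrite leq_maxl.
have hl : (l <= N)%N by rewrite leq_maxr.
set D := bser_sub (bser_add Sx Sxu) (bser_mul Sx Sxu).
set sx := phi N Sx; set su := phi N Sxu; set g := phi N gxu.
set p := phi N Ps; set q := phi N Qs.
have hG : eqN N g (su * p).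
  exact: (@eqN_trans N _ _ _ (@eqN_phi_ext N _ _ G_id) (@eqN_phi_mul N _ _)).
have hS1 : eqN N (phi N (bser_sub Sx one)) (sx - 1).
  exact: (@eqN_trans N _ _ _ (@eqN_phi_sub N _ _) (@eqN_sub N _ _ _ _ (@eqN_refl N _) (@eqN_one N))).
have hS2 : eqN N (phi N (bser_sub Sxu one)) (su - 1).
  exact: (@eqN_trans N _ _ _ (@eqN_phi_sub N _ _) (@eqN_sub N _ _ _ _ (@eqN_refl N _) (@eqN_one N))).
have hP : eqN N p (exu + q * (sx - 1)).
  apply: (@eqN_trans N _ _ _ (@eqN_phi_ext N _ _ P_id)).
  apply: (@eqN_trans N _ _ _ (@eqN_phi_add N _ _)).
  apply: (@eqN_add N); first exact: (@eqN_E N).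
  apply: (@eqN_trans N _ _ _ (@eqN_phi_mul N _ _)).
  exact: (@eqN_mulr N _ _ _ hS1).
have hQ : eqN N q (exu + (su - 1) * p).
  apply: (@eqN_trans N _ _ _ (@eqN_phi_ext N _ _ Q_id)).
  apply: (@eqN_trans N _ _ _ (@eqN_phi_add N _ _)).
  apply: (@eqN_add N); first exact: (@eqN_E N).
  apply: (@eqN_trans N _ _ _ (@eqN_phi_mul N _ _)).
  exact: (@eqN_mull N _ _ _ hS2).
have hD : eqN N (phi N D) (sx + su - sx * su).
  apply: (@eqN_trans N _ _ _ (@eqN_phi_sub N _ _)).
  apply: (@eqN_sub N); first exact: (@eqN_phi_add N _ _).
  exact: (@eqN_phi_mul N _ _).
have h2 : eqN N p (exu + (exu + (su - 1) * p) * (sx - 1)).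
  exact: (@eqN_trans N _ _ _ hP (@eqN_add N _ _ _ _ (@eqN_refl N _) (@eqN_mull N _ _ _ hQ))).
have h3 : eqN N (p * (sx + su - sx * su)) (exu * sx).
  have e1 : p * (sx + su - sx * su) = p - (sx - 1) * (su - 1) * p by ring.
  have e2 : exu + (exu + (su - 1) * p) * (sx - 1) - (sx - 1) * (su - 1) * p = exu * sx by ring.
  rewrite e1 -e2; exact: (@eqN_sub N _ _ _ _ h2 (@eqN_refl N _)).
have h4 : eqN N (g * phi N D) (exu * phi N (bser_mul Sx Sxu)).
  apply: (@eqN_trans N _ _ _ (@eqN_mull N _ _ _ hG)).
  apply: (@eqN_trans N _ _ _ (@eqN_mulr N _ _ _ hD)).
  rewrite -mulrA.
  apply: (@eqN_trans N _ _ _ (@eqN_mulr N _ _ _ h3)).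
  have e3 : su * (exu * sx) = exu * (sx * su) by ring.
  rewrite e3; apply: (@eqN_mulr N); apply: (@eqN_sym N); exact: (@eqN_phi_mul N _ _).
rewrite (@bser_mul_phi N) // h4 // cf_xu.
clearbody N.
case: n hn => [|n] hn //; case: l hl => [|l] hl //=.
rewrite cf_phi //; [exact: ltnW | exact: ltnW].
Qed.

Theorem proposition2p1 :
  bser_mul gxu (bser_sub (bser_add Sx Sxu) (bser_mul Sx Sxu))
  = bser_mul_xu (bser_mul Sx Sxu).
Proof. exact: main_thm. Qed.
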